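(* Let $1<p<\infty$ and $1<q<\infty$. Then there exists a measurable function $f$ on $\mathbb{R}^2$ such that almost every $x$-section $f_x$ and almost every $y$-section $f_y$ belong to $\operatorname{Lip}\frac1p$, the functions $x\mapsto\|f_x\|_{\operatorname{Lip}\frac1p}$ and $y\mapsto\|f_y\|_{\operatorname{Lip}\frac1p}$ both belong to $L^{p,q}(\mathbb{R})$, but $f\notin L^\infty(\mathbb{R}^2)$.
   Context: For a function $f$ on $\mathbb{R}^2$, $f_x(y)=f(x,y)$ and $f_y(x)=f(x,y)$ denote the sections. For $\varphi$ on $\mathbb{R}$, $\Delta_h\varphi(t)=\varphi(t+h)-\varphi(t)$; for $\alpha\in(0,1]$, $\operatorname{Lip}\alpha$ is the class of $\varphi\in L^\infty(\mathbb{R})$ with $\|\varphi\|^*_{\operatorname{Lip}\alpha}=\sup_{h>0}h^{-\alpha}\|\Delta_h\varphi\|_\infty<\infty$ ($\|\cdot\|_\infty$ the essential supremum), and $\|\varphi\|_{\operatorname{Lip}\alpha}=\|\varphi\|_\infty+\|\varphi\|^*_{\operatorname{Lip}\alpha}$. For measurable a.e. finite $g$ on $\mathbb{R}$ with $|\{|g|>s\}|<\infty$ for all $s>0$, $g^*$ is its non-increasing rearrangement on $(0,\infty)$, and $L^{p,q}(\mathbb{R})$ consists of such $g$ with $\|g\|_{L^{p,q}}=\left(\int_0^\infty(t^{1/p}g^*(t))^q\frac{dt}{t}\right)^{1/q}<\infty$. *)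

(* Defs.v *)
From HB Require Import structures.
From mathcomp Require Import all_boot all_order all_algebra.
From mathcomp Require Import all_classical all_reals all_analysis.
From mathcomp Require Import measurable_realfun ess_sup_inf.
Set Implicit Arguments. Unset Strict Implicit. Unset Printing Implicit Defensive.
Import Order.TTheory GRing.Theory Num.Theory.
Import numFieldNormedType.Exports.
Local Open Scope classical_set_scope.
Local Open Scope ring_scope.

Section defs.
Context {R : realType}.
Local Notation leb := (@lebesgue_measure R).

Definition supnorm (phi : R -> R) : \bar R :=
  ess_sup leb (fun t => (`|phi t|)%:E).

Definition lip_seminorm (alpha : R) (phi : R -> R) : \bar R :=
  ereal_sup [set ((h `^ (- alpha))%:E * supnorm (fun t => (phi (t + h) - phi t)%R))%E
            | h in `]0, +oo[%classic].

Definition lip_norm (alpha : R) (phi : R -> R) : \bar R :=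
  (supnorm phi + lip_seminorm alpha phi)%E.

Definition in_Lip (alpha : R) (phi : R -> R) : Prop :=
  [/\ measurable_fun setT phi, (supnorm phi < +oo)%E
    & (lip_seminorm alpha phi < +oo)%E].

Definition rearrangement (g : R -> \bar R) (t : R) : \bar R :=
  ereal_inf [set s%:E | s in [set s : R | 0 <= s /\
     (leb [set x | (s%:E < `|g x|)%E] <= t%:E)%E]].

Definition lorentz_norm (p q : R) (g : R -> \bar R) : \bar R :=
  poweR (\int[leb]_(t in `]0%R, +oo[%classic)
           (poweR ((t `^ p^-1)%R%:E * rearrangement g t) q * (t^-1)%R%:E))%E q^-1.

Definition in_Lorentz (p q : R) (g : R -> \bar R) : Prop :=
  [/\ measurable_fun [set: R] g,
      {ae leb, forall x, g x \is a fin_num},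
      (forall s : R, 0 < s -> (leb [set x | (s%:E < `|g x|)%E] < +oo)%E)
    & (lorentz_norm p q g < +oo)%E].

Definition in_Linf2 (f : R * R -> R) : Prop :=
  measurable_fun setT f /\
  (ess_sup (leb \x leb)%E (fun z => (`|f z|)%:E) < +oo)%E.

End defs.

(* Main.v *)
Require Import Defs.
From HB Require Import structures.
From mathcomp Require Import all_boot all_order all_algebra.
From mathcomp Require Import all_classical all_reals all_analysis.
From mathcomp Require Import measurable_realfun ess_sup_inf.
From mathcomp Require Import ring lra.
Import Order.TTheory GRing.Theory Num.Theory.
Import numFieldNormedType.Exports.
Local Open Scope classical_set_scope.
Local Open Scope ring_scope.

Set Implicit Arguments. Unset Strict Implicit. Unset Printing Implicit Defensive.

Section PsiSec.
Context {R : realType}.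
Variables (a b : R).
Hypotheses (a0 : 0 < a) (a1 : a <= 1) (b2 : 2 <= b) (ba : b `^ a = 2).

Definition cc (k : nat) : R := k%:R / (k.+1%:R * k.+2%:R).
Definition tau k (u : R) : R := Num.max 0 (1 - b ^+ k * u).
Definition Psin n u := \sum_(k < n) cc k * tau k u.
Definition Kf (u : R) : nat := (Num.trunc u^-1).+1.
Definition Psi u := Psin (Kf u) u.
Definition En n : R := \sum_(k < n) cc k * 2 ^+ k.

Lemma cc_ge0 k : 0 <= cc k.
Proof. by rewrite /cc divr_ge0 // mulr_ge0. Qed.

Lemma tau_ge0 k u : 0 <= tau k u.
Proof. by rewrite /tau le_max lexx. Qed.

Lemma b_ge1 : 1 <= b.
Proof. by apply: le_trans b2; rewrite ler1n. Qed.

Lemma b_gt0 : 0 < b.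
Proof. exact: lt_le_trans ltr01 b_ge1. Qed.

Lemma bX_ge1 k : 1 <= b ^+ k.
Proof. exact: exprn_ege1 b_ge1. Qed.

Lemma bX_gt0 k : 0 < b ^+ k.
Proof. exact: lt_le_trans ltr01 (bX_ge1 k). Qed.

Lemma tau_le1 k u : 0 <= u -> tau k u <= 1.
Proof.
move=> u0; rewrite /tau ge_max ler01 /= lerBlDr lerDl.
by rewrite mulr_ge0 // ltW // bX_gt0.
Qed.

Lemma bX_nat k : k%:R <= b ^+ k.
Proof.
elim: k => [|k IH]; first by rewrite expr0.
rewrite exprS -natr1.
have h1 := bX_ge1 k.
have : 2 * b ^+ k <= b * b ^+ k by rewrite ler_wpM2r // ltW // bX_gt0.
lra.
Qed.

Lemma tau_eq0 k u : 1 <= b ^+ k * u -> tau k u = 0.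
Proof. by move=> h; rewrite /tau; apply/max_idPl; rewrite subr_le0. Qed.

Lemma good_mono u n m : 0 <= u -> (n <= m)%N -> 1 <= b ^+ n * u -> 1 <= b ^+ m * u.
Proof.
move=> u0 nm h; apply: le_trans h _; rewrite ler_wpM2r //.
by apply: (ler_weXn2l b_ge1).
Qed.

Lemma Psin_widen u n m : 0 <= u -> (n <= m)%N -> 1 <= b ^+ n * u ->
  Psin m u = Psin n u.
Proof.
move=> u0 nm h; rewrite /Psin (big_ord_widen m (fun k => cc k * tau k u) nm).
rewrite [RHS]big_mkcond /=; apply: eq_bigr => i _; case: ifP => // hi.
by rewrite tau_eq0 ?mulr0 // (good_mono u0 _ h) // leqNgt hi.
Qed.

Lemma Kf_good u : 0 < u -> 1 <= b ^+ (Kf u) * u.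
Proof.
move=> u0; apply: le_trans (ler_wpM2r (ltW u0) (bX_nat _)).
have := truncnS_gt (u^-1); rewrite -/(Kf u) => h.
have : u^-1 * u <= (Kf u)%:R * u by rewrite ler_wpM2r // ltW.
by rewrite mulVf // gt_eqF.
Qed.

Lemma Psin_eq u n m : 0 <= u -> 1 <= b ^+ n * u -> 1 <= b ^+ m * u ->
  Psin n u = Psin m u.
Proof.
move=> u0 hn hm; have [nm|mn] := leqP n m.
  by rewrite (Psin_widen u0 nm hn).
by rewrite (Psin_widen u0 (ltnW mn) hm).
Qed.

Lemma PsiE u n : 0 < u -> 1 <= b ^+ n * u -> Psi u = Psin n u.
Proof. by move=> u0 h; rewrite /Psi (Psin_eq (ltW u0) (Kf_good u0) h). Qed.

Lemma Psin_ge0 n u : 0 <= Psin n u.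
Proof. by apply: sumr_ge0 => k _; rewrite mulr_ge0 ?cc_ge0 ?tau_ge0. Qed.

Lemma Psi_ge0 u : 0 <= Psi u.
Proof. exact: Psin_ge0. Qed.

Lemma good_le r u n : 0 < r -> r <= u -> 1 <= b ^+ n * r -> 1 <= b ^+ n * u.
Proof.
move=> r0 ru h; apply: le_trans h _; rewrite ler_wpM2l // ltW //; exact: bX_gt0.
Qed.

Lemma Psi_le r u n : 0 < r -> r <= u -> 1 <= b ^+ n * r -> Psi u <= En n.
Proof.
move=> r0 ru h; have u0 : 0 < u by exact: lt_le_trans ru.
rewrite (PsiE u0 (good_le r0 ru h)); apply: ler_sum => k _.
rewrite ler_wpM2l ?cc_ge0 //; apply: le_trans (tau_le1 _ (ltW u0)) _.
by apply: exprn_ege1; rewrite ler1n.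
Qed.

Lemma tau_lip k u v : 0 <= u -> 0 <= v ->
  `|tau k u - tau k v| <= b ^+ k * `|u - v| /\ `|tau k u - tau k v| <= 1.
Proof.
move=> u0 v0.
have -> : b ^+ k * `|u - v| = `|b ^+ k * u - b ^+ k * v|.
  by rewrite -mulrBr normrM (ger0_norm (ltW (bX_gt0 k))).
have hu : 0 <= b ^+ k * u by rewrite mulr_ge0 // ltW // bX_gt0.
have hv : 0 <= b ^+ k * v by rewrite mulr_ge0 // ltW // bX_gt0.
move: hu hv; rewrite /tau; set x := b ^+ k * u; set y := b ^+ k * v => hx hy.
have [h1|h1] := leP (1 - x) 0; have [h2|h2] := leP (1 - y) 0;
have n1 := ler_norm (x - y); have n2 := ler_norm (y - x); rewrite distrC in n2;
have n0 := normr_ge0 (x - y); rewrite !ler_norml; split; apply/andP; split; lra.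
Qed.

Lemma pow_min z w : 0 <= z -> 0 <= w -> w <= 1 -> w <= z -> w <= z `^ a.
Proof.
move=> z0 w0 w1 wz; have [z1|z1] := leP z 1.
  move: z0; rewrite le_eqVlt => /predU1P[z0|z0].
    by move: wz; rewrite -z0 => wz; apply: le_trans wz (powR_ge0 _ _).
  by apply: le_trans wz _; apply: ger1_powR => //; rewrite z0 z1.
apply: le_trans w1 _; rewrite -(powRr0 z); apply: ler_powR; first exact: ltW.
exact: ltW.
Qed.

Lemma bXpow k : (b ^+ k) `^ a = 2 ^+ k.
Proof.
rewrite -powR_mulrn ?ltW ?b_gt0 // -powRrM mulrC powRrM ba powR_mulrn //.
Qed.

Lemma Psi_holder r n u v : 0 < r -> 1 <= b ^+ n * r -> r <= u -> r <= v ->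
  `|Psi u - Psi v| <= En n * `|u - v| `^ a.
Proof.
move=> r0 h ru rv.
have u0 : 0 < u by exact: lt_le_trans ru.
have v0 : 0 < v by exact: lt_le_trans rv.
rewrite (PsiE u0 (good_le r0 ru h)) (PsiE v0 (good_le r0 rv h)) /Psin -sumrB.
rewrite /En mulr_suml; apply: le_trans (ler_norm_sum _ _ _) _.
apply: ler_sum => k _; rewrite -mulrBr normrM (ger0_norm (cc_ge0 k)) -mulrA.
rewrite ler_wpM2l ?cc_ge0 //.
have [hl h1] := tau_lip k (ltW u0) (ltW v0).
rewrite -bXpow -powRM; last 2 first; [exact: ltW (bX_gt0 k)|exact: normr_ge0|].
by apply: pow_min => //; rewrite mulr_ge0 // ltW // bX_gt0.
Qed.

Lemma Psi_mono u v : 0 < u -> u <= v -> Psi v <= Psi u.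
Proof.
move=> u0 uv; have v0 : 0 < v by exact: lt_le_trans uv.
have hu := Kf_good u0.
rewrite (PsiE u0 hu) (PsiE v0 (good_le u0 uv hu)).
apply: ler_sum => k _; rewrite ler_wpM2l ?cc_ge0 // /tau ge_max le_max lexx /=.
rewrite le_max; apply/orP; right; rewrite lerB // ler_wpM2l // ltW //; exact: bX_gt0.
Qed.

Lemma En_le n : En n <= 2 ^+ n / n.+1%:R.
Proof.
elim: n => [|n IH]; first by rewrite /En big_ord0 expr0 divr1.
rewrite /En big_ord_recr /= -/(En n).
suff e : 2 ^+ n / n.+1%:R + cc n * 2 ^+ n = 2 ^+ n.+1 / n.+2%:R.
  by rewrite -e lerD2r.
have e1 : n.+1%:R = n%:R + 1 :> R by rewrite -addn1 natrD.
have e2 : n.+2%:R = n%:R + 2 :> R by rewrite -addn2 natrD.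
have n1 : n%:R + 1 != 0 :> R by rewrite -e1 pnatr_eq0.
have n2 : n%:R + 2 != 0 :> R by rewrite -e2 pnatr_eq0.
rewrite /cc e1 e2 exprS; field.
by rewrite n1 n2.
Qed.

End PsiSec.

Lemma harm_unbounded (R : realType) (M : R) :
  exists n, M <= \sum_(k < n) (k.+1%:R)^-1.
Proof.
case: (pselect (exists n, M <= \sum_(k < n) (k.+1%:R : R)^-1)) => // hn.
exfalso; apply: (@dvg_harmonic R); apply: nondecreasing_is_cvgn.
  move=> i j ij; rewrite /series /=.
  by apply: nondecreasing_series => // k _ _; rewrite invr_ge0.
exists M => _ [n _ <-]; rewrite /series /= big_mkord.
rewrite leNgt; apply/negP => h; apply: hn; exists n; exact: ltW.
Qed.

Section PsiSec2.
Context {R : realType}.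
Variables (a b : R).
Hypotheses (a0 : 0 < a) (a1 : a <= 1) (b2 : 2 <= b) (ba : b `^ a = 2).

Lemma cc_lb k : (6 * k.+1%:R)^-1 <= cc k.+1 :> R.
Proof.
rewrite /cc.
have e1 : k.+1%:R = k%:R + 1 :> R by rewrite -addn1 natrD.
have e2 : k.+2%:R = k%:R + 2 :> R by rewrite -addn2 natrD.
have e3 : k.+3%:R = k%:R + 3 :> R by rewrite -addn3 natrD.
rewrite e1 e2 e3; set x := k%:R; have x0 : 0 <= x by exact: ler0n.
rewrite -subr_ge0.
have -> : (x + 1) / ((x + 2) * (x + 3)) - (6 * (x + 1))^-1 =
  (5 * x ^+ 2 + 7 * x) / (6 * (x + 1) * (x + 2) * (x + 3)).
  field; apply/and3P; split; apply/negP => /eqP; lra.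
apply: divr_ge0; first by apply: addr_ge0; apply: mulr_ge0 => //; rewrite exprn_ge0.
apply: mulr_ge0; [apply: mulr_ge0; [apply: mulr_ge0|]|]; lra.
Qed.

Lemma Psin_le_n n m u : (n <= m)%N -> Psin b n u <= Psin b m u.
Proof.
move=> nm; rewrite /Psin (big_ord_widen m (fun k => cc k * tau b k u) nm).
rewrite [X in X <= _]big_mkcond /=; apply: ler_sum => i _; case: ifP => // _.
by rewrite mulr_ge0 ?cc_ge0 ?tau_ge0.
Qed.

Lemma cc_unbounded (M : R) : exists n, M <= \sum_(k < n) cc k.
Proof.
have [n hn] := harm_unbounded (6 * M).
exists n.+1; rewrite big_ord_recl /= {1}/cc mul0r add0r.
have : M <= \sum_(k < n) (6 * k.+1%:R)^-1.
  rewrite -(@ler_pM2l _ 6); last by lra.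
  rewrite mulr_sumr; apply: le_trans hn _; apply: ler_sum => i _.
  by rewrite invfM mulrA mulfV ?mul1r // pnatr_eq0.
move/le_trans; apply; apply: ler_sum => i _; exact: cc_lb.
Qed.

Lemma Psi_unbounded (M : R) : exists2 e : R, 0 < e &
  forall u, 0 < u -> u <= e -> M <= Psi b u.
Proof.
have [n hn] := cc_unbounded (2 * M).
have bn := bX_gt0 b2 n.
exists (2 * b ^+ n)^-1; first by rewrite invr_gt0 mulr_gt0.
move=> u u0 ue.
pose N := maxn n (Kf u).
have hN : 1 <= b ^+ N * u.
  by apply: (good_mono b2 (ltW u0) _ (Kf_good b2 u0)); rewrite leq_maxr.
rewrite (PsiE b2 u0 hN); apply: le_trans (Psin_le_n u (leq_maxl n (Kf u))).
have : M <= \sum_(k < n) cc k * 2^-1.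
  by rewrite -mulr_suml; move: hn; lra.
move/le_trans; apply; apply: ler_sum => k _.
rewrite ler_wpM2l ?cc_ge0 // /tau le_max; apply/orP; right.
have : b ^+ k * u <= 2^-1.
  have bk : b ^+ k <= b ^+ n.
    by apply: (ler_weXn2l (b_ge1 b2)); exact: ltnW (ltn_ord k).
  apply: le_trans (ler_wpM2r (ltW u0) bk) _.
  apply: le_trans (ler_wpM2l (ltW bn) ue) _.
  by rewrite invfM mulrCA mulfV ?gt_eqF // mulr1.
lra.
Qed.

End PsiSec2.

Section Gen.
Context {R : realType}.
Local Notation leb := (@lebesgue_measure R).

Lemma lebT_gt0 : (0 < leb [set: R])%E.
Proof. by rewrite -set_itvNyy lebesgue_measure_itv /= addye // lt0y. Qed.

Lemma supnorm_le (phi : R -> R) (M : R) : (forall t, `|phi t| <= M) ->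
  (supnorm phi <= M%:E)%E.
Proof. by move=> h; apply/ess_supP; apply: aeW => t; rewrite lee_fin. Qed.

Lemma supnorm_ge0 (phi : R -> R) : (0 <= supnorm phi)%E.
Proof. by apply: ess_sup_gee; [exact: lebT_gt0|apply: aeW => t; rewrite lee_fin]. Qed.

Lemma supnorm_mono (phi psi : R -> R) : (forall t, `|phi t| <= `|psi t|) ->
  (supnorm phi <= supnorm psi)%E.
Proof. by move=> h; apply: le_ess_sup; apply: aeW => t; rewrite lee_fin. Qed.

Lemma lip_seminorm_le (a : R) (phi : R -> R) (M : R) : 0 <= M ->
  (forall h t, 0 < h -> `|phi (t + h) - phi t| <= M * h `^ a) ->
  (lip_seminorm a phi <= M%:E)%E.
Proof.
move=> M0 hl; rewrite /lip_seminorm; apply: ge_ereal_sup => _ [h /= h0 <-].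
move: h0; rewrite in_itv /= andbT => h0.
have hM := supnorm_le (fun t => hl h t h0).
apply: le_trans (lee_wpmul2l _ hM) _; first by rewrite lee_fin powR_ge0.
rewrite -EFinM lee_fin powRN mulrCA mulVf ?mulr1 //.
by rewrite gt_eqF // powR_gt0.
Qed.

Lemma lip_seminorm_ge0 (a : R) (phi : R -> R) : (0 <= lip_seminorm a phi)%E.
Proof.
rewrite /lip_seminorm.
apply: (@le_trans _ _ (((1:R) `^ (- a))%:E * supnorm (fun t : R => (phi (t + 1) - phi t)%R))%E).
  by apply: mule_ge0; [rewrite lee_fin powR_ge0|exact: supnorm_ge0].
by apply: ereal_sup_ubound; exists 1 => //; rewrite /= in_itv /= ltr01.
Qed.

Lemma lip_norm_ge0 (a : R) (phi : R -> R) : (0 <= lip_norm a phi)%E.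
Proof. by apply: adde_ge0; [exact: supnorm_ge0|exact: lip_seminorm_ge0]. Qed.

Lemma min_lip (c x y : R) : `|Num.min c x - Num.min c y| <= `|x - y|.
Proof.
have n1 := ler_norm (x - y); have n2 := ler_norm (y - x); rewrite distrC in n2.
have n0 := normr_ge0 (x - y).
have [h1|h1] := leP c x; have [h2|h2] := leP c y;
rewrite ler_norml; apply/andP; split; lra.
Qed.

Lemma max_lip (c x y : R) : `|Num.max c x - Num.max c y| <= `|x - y|.
Proof.
have n1 := ler_norm (x - y); have n2 := ler_norm (y - x); rewrite distrC in n2.
have n0 := normr_ge0 (x - y).
have [h1|h1] := leP c x; have [h2|h2] := leP c y;
rewrite ler_norml; apply/andP; split; lra.
Qed.

Lemma abs_mono_measurable (N : R -> \bar R) :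
  (forall x y, 0 < x -> x <= y -> (N y <= N x)%E) ->
  measurable_fun setT (fun x : R => N `|x|).
Proof.
move=> Nmono; apply: (measurability _ (ErealGenCInfty.measurableE R)) => //.
move=> _ [_ [r ->] <-].
pose S := [set x : R | 0 < x /\ (r%:E <= N x)%E].
have iS : is_interval S.
  move=> x y [x0 xr] [y0 yr] z /andP[xz zy].
  have z0 : 0 < z by exact: lt_le_trans xz.
  by split => //; exact: le_trans yr (Nmono _ _ z0 zy).
have iS' : is_interval [set x : R | S (- x)].
  move=> x y Sx Sy z /andP[xz zy]; apply: (iS (- y) (- x)) => //.
  by rewrite !lerN2 zy xz.
have mS : measurable (S `|` [set x | S (- x)]).
  by apply: measurableU; apply: is_interval_measurable.
have [P0|P0] := pselect (r%:E <= N 0%R)%E.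
- rewrite (_ : _ `&` _ = (S `|` [set x | S (- x)]) `|` [set 0%R]).
    by apply: measurableU; last exact: measurable_set1.
  apply/seteqP; split => x /=.
    rewrite in_itv /= andbT => -[_ h1].
    have [x0|x0|->] := ltgtP x 0; [left; right|left; left|by right].
      by rewrite ltr0_norm // in h1; split => //; rewrite oppr_gt0.
    by rewrite gtr0_norm // in h1.
  move=> [[Sx|Sx]|->]; split => //; rewrite in_itv /= andbT.
  + by case: Sx => x0 h1; rewrite gtr0_norm.
  + by case: Sx => x0 h1; rewrite ltr0_norm // -oppr_gt0.
  + by rewrite normr0.
- rewrite (_ : _ `&` _ = (S `|` [set x | S (- x)])) //.
  apply/seteqP; split => x /=.
    rewrite in_itv /= andbT => -[_ h1].
    have [x0|x0|x0] := ltgtP x 0; [right|left|].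
      by rewrite ltr0_norm // in h1; split => //; rewrite oppr_gt0.
    by rewrite gtr0_norm // in h1.
    by exfalso; apply: P0; rewrite x0 normr0 in h1.
  move=> [Sx|Sx]; split => //; rewrite in_itv /= andbT.
  + by case: Sx => x0 h1; rewrite gtr0_norm.
  + by case: Sx => x0 h1; rewrite ltr0_norm // -oppr_gt0.
Qed.

End Gen.

Section SecD.
Context {R : realType}.
Variables (a b : R).
Hypotheses (a0 : 0 < a) (a1 : a <= 1) (b2 : 2 <= b) (ba : b `^ a = 2).

Definition sec (r y : R) := Psi b (Num.max r `|y|).

Lemma En_ge0 n : 0 <= En n :> R.
Proof. by apply: sumr_ge0 => k _; rewrite mulr_ge0 ?cc_ge0 // exprn_ge0. Qed.

Lemma sec_bound r n y : 0 < r -> 1 <= b ^+ n * r -> 0 <= sec r y <= En n.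
Proof.
move=> r0 h; rewrite /sec Psi_ge0 /=.
by apply: (Psi_le b2 r0 _ h); rewrite le_max lexx.
Qed.

Lemma sec_holder r n h t : 0 < r -> 1 <= b ^+ n * r -> 0 < h ->
  `|sec r (t + h) - sec r t| <= En n * h `^ a.
Proof.
move=> r0 hn h0; rewrite /sec.
have hu : r <= Num.max r `|t + h| by rewrite le_max lexx.
have hv : r <= Num.max r `|t| by rewrite le_max lexx.
apply: le_trans (Psi_holder a0 a1 b2 ba r0 hn hu hv) _.
rewrite ler_wpM2l ?En_ge0 //.
apply: ge0_ler_powR; [exact: ltW|by rewrite nnegrE|by rewrite nnegrE ltW|].
apply: le_trans (max_lip _ _ _) _; apply: le_trans (ler_dist_dist _ _) _.
by rewrite addrAC subrr add0r gtr0_norm.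
Qed.

Lemma Psi_abs_measurable : measurable_fun setT (fun x : R => Psi b `|x|).
Proof.
apply/measurable_EFinP.
have H : forall x y : R, 0 < x -> x <= y -> ((Psi b y)%:E <= (Psi b x)%:E)%E.
  by move=> x y x0 xy; rewrite lee_fin; exact: Psi_mono.
exact: (abs_mono_measurable H).
Qed.

Lemma sec_measurable r : 0 <= r -> measurable_fun setT (sec r).
Proof.
move=> r0.
have -> : sec r = (fun x : R => Psi b `|x|) \o (fun y => Num.max r `|y|).
  apply/funext => y /=; rewrite /sec [`|Num.max _ _|]ger0_norm //.
  by apply: le_trans r0 _; rewrite le_max lexx.
apply: measurableT_comp; first exact: Psi_abs_measurable.
exact: (measurable_maxr (measurable_cst r) (@normr_measurable R setT)).
Qed.

Lemma sec_inLip r : 0 < r -> in_Lip a (sec r).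
Proof.
move=> r0; have hn := Kf_good b2 r0.
split; first exact: sec_measurable (ltW r0).
- apply: le_lt_trans (supnorm_le (M := En (Kf r)) _) _; last exact: ltry.
  move=> t; have /andP[h1 h2] := sec_bound t r0 hn; by rewrite ger0_norm.
- apply: le_lt_trans (lip_seminorm_le (M := En (Kf r)) _ _) _.
  + exact: En_ge0.
  + by move=> h t h0; exact: sec_holder.
  + exact: ltry.
Qed.

Lemma sec_lipnorm_le r n : 0 < r -> 1 <= b ^+ n * r ->
  (lip_norm a (sec r) <= (2 * En n)%:E)%E.
Proof.
move=> r0 hn; rewrite /lip_norm mulr2n mulrDl mul1r EFinD; apply: leeD.
  apply: supnorm_le => t; have /andP[h1 h2] := sec_bound t r0 hn.
  by rewrite ger0_norm.
apply: lip_seminorm_le; first exact: En_ge0.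
by move=> h t h0; exact: sec_holder.
Qed.

Lemma sec_min r r' y : 0 < r -> r <= r' -> sec r' y = Num.min (Psi b r') (sec r y).
Proof.
move=> r0 rr'; have r'0 : 0 < r' by exact: lt_le_trans rr'.
rewrite /sec; have [yr|yr] := leP r' `|y|.
- rewrite (max_idPr (le_trans rr' yr)).
  by apply/esym/min_idPr; exact: Psi_mono.
- apply/esym/min_idPl.
  apply: (Psi_mono b2); first by apply: lt_le_trans r0 _; rewrite le_max lexx.
  by rewrite ge_max rr' ltW.
Qed.

Lemma lipnorm_mono r r' : 0 < r -> r <= r' ->
  (lip_norm a (sec r') <= lip_norm a (sec r))%E.
Proof.
move=> r0 rr'; rewrite /lip_norm; apply: leeD.
  apply: supnorm_mono => t; rewrite (sec_min _ r0 rr').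
  have /andP[h1 _] := sec_bound t r0 (Kf_good b2 r0).
  have h3 := Psi_ge0 b r'.
  rewrite !ger0_norm //; last by rewrite le_min h1 h3.
  by rewrite ge_min lexx orbT.
rewrite /lip_seminorm; apply: ge_ereal_sup => _ [h /= h0 <-].
apply: le_trans _ (ereal_sup_ubound _); last by exists h.
apply: lee_wpmul2l; first by rewrite lee_fin powR_ge0.
apply: supnorm_mono => t; rewrite !(sec_min _ r0 rr').
exact: min_lip.
Qed.

Lemma G_measurable : measurable_fun setT (fun x : R => lip_norm a (sec `|x|)).
Proof.
have H : forall x y : R, 0 < x -> x <= y ->
    (lip_norm a (sec y) <= lip_norm a (sec x))%E.
  by move=> x y x0 xy; exact: lipnorm_mono.
exact: (abs_mono_measurable H).
Qed.

End SecD.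

Section GenE.
Context {R : realType}.
Local Notation leb := (@lebesgue_measure R).

Lemma my_le_integral (D : set R) (f1 f2 : R -> \bar R) :
  (forall x, D x -> (0 <= f1 x)%E) -> (forall x, D x -> (f1 x <= f2 x)%E) ->
  (\int[leb]_(x in D) f1 x <= \int[leb]_(x in D) f2 x)%E.
Proof.
move=> f10 f12.
have f20 : forall x, D x -> (0 <= f2 x)%E by move=> x Dx; exact: le_trans (f10 _ Dx) (f12 _ Dx).
rewrite (ge0_integralE leb f10) (ge0_integralE leb f20).
apply: ereal_sup_le => _ [h hf <-]; exists h => // x.
apply: le_trans (hf x) _; rewrite /patch; case: ifP => // /set_mem Dx.
exact: f12.
Qed.

Lemma ae_nonzero (P : R -> Prop) : (forall x, x != 0 -> P x) ->
  {ae leb, forall x, P x}.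
Proof.
move=> hP; exists [set 0%R]; split; first exact: measurable_set1.
  exact: lebesgue_measure_set1.
move=> x /= nPx; apply: contrapT => x0; apply: nPx; apply: hP.
by apply/eqP.
Qed.

Lemma rearr_ge0 (g : R -> \bar R) t : (0 <= rearrangement g t)%E.
Proof.
by apply: le_ereal_inf_tmp => _ [s [s0 _] <-]; rewrite lee_fin.
Qed.

Lemma rearr_le (g : R -> \bar R) t s : 0 <= s ->
  (leb [set x | (s%:E < `|g x|)%E] <= t%:E)%E -> (rearrangement g t <= s%:E)%E.
Proof. by move=> s0 h; apply: ereal_inf_le; exists s%:E => //; exists s. Qed.

Lemma powR_invr (x r : R) : 0 < x -> (x^-1) `^ r = (x `^ r)^-1.
Proof.
move=> x0; apply: (@mulIf _ (x `^ r)); first by rewrite gt_eqF // powR_gt0.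
rewrite mulVf ?gt_eqF ?powR_gt0 // -powRM ?invr_ge0 ?ltW //.
by rewrite mulVf ?gt_eqF // powR1.
Qed.

Lemma powR_expR (x r : R) : 0 < x -> x `^ r = expR (r * ln x).
Proof. by move=> x0; rewrite /powR gt_eqF. Qed.

Lemma key_tel (q x : R) : 1 < q -> 1 <= x ->
  (q - 1) * ((x + 1)^-1) `^ q <= x `^ (1 - q) - (x + 1) `^ (1 - q).
Proof.
move=> q1 x1; have x0 : 0 < x by lra.
have x10 : 0 < x + 1 by lra.
rewrite powR_invr // !powR_expR //.
set L := ln x; set L' := ln (x + 1).
set E1 := expR ((1 - q) * L').
have eA : expR ((1 - q) * L) = E1 * expR ((q - 1) * (L' - L)).
  by rewrite /E1 -expRD; congr expR; ring.
have eB : (expR (q * L'))^-1 = E1 * (x + 1)^-1.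
  rewrite -expRN -[in RHS](@lnK _ (x + 1)) ?posrE // -expRN -expRD.
  by congr expR; rewrite /E1 /L'; ring.
rewrite eA eB.
have hd : (x + 1)^-1 <= L' - L.
  have : ln (x / (x + 1)) <= - (x + 1)^-1.
    have -> : x / (x + 1) = 1 + (- (x + 1)^-1).
      by field; apply/negP => /eqP; lra.
    apply: le_ln1Dx; rewrite ltrN2 invf_lt1 //; lra.
  rewrite lnM ?posrE ?invr_gt0 // lnV ?posrE // -/L -/L'; lra.
have he := expR_ge1Dx ((q - 1) * (L' - L)).
have E10 : 0 < E1 by exact: expR_gt0.
have : (q - 1) * (x + 1)^-1 <= expR ((q - 1) * (L' - L)) - 1.
  have : (q - 1) * (x + 1)^-1 <= (q - 1) * (L' - L).
    by rewrite ler_wpM2l // subr_ge0 ltW.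
  lra.
move=> h; rewrite mulrCA -[X in _ <= X - _]mulr1 -[X in _ <= _ - X]mulr1.
rewrite [E1 * _ * 1]mulr1 -mulrBr; apply: ler_wpM2l; [exact: ltW|].
lra.
Qed.

Lemma pseries_bound (q : R) (n : nat) : 1 < q ->
  \sum_(j < n) ((j.+2%:R)^-1) `^ q <= (q - 1)^-1.
Proof.
move=> q1; have q0 : 0 < q - 1 by lra.
rewrite -(@ler_pM2l _ (q - 1)) // mulfV ?gt_eqF // mulr_sumr.
pose g (k : nat) : R := - (k.+1%:R `^ (1 - q)).
apply: (@le_trans _ _ (\sum_(0 <= k < n) (g k.+1 - g k))).
  rewrite big_mkord; apply: ler_sum => k _; rewrite /g.
  have -> : k.+2%:R = k.+1%:R + 1 :> R by rewrite -addn1 natrD.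
  have := @key_tel q k.+1%:R q1; rewrite ler1n => /(_ isT); lra.
rewrite telescope_sumr // /g opprK powR1.
have := powR_ge0 (n.+1%:R : R) (1 - q); lra.
Qed.

End GenE.

Section SecF.
Context {R : realType}.
Local Notation leb := (@lebesgue_measure R).
Variables (a b : R).
Hypotheses (a0 : 0 < a) (a1 : a <= 1) (b2 : 2 <= b) (ba : b `^ a = 2).

Definition Gf (x : R) := lip_norm a (sec b `|x|).

Lemma Gf_ge0 x : (0 <= Gf x)%E.
Proof. exact: lip_norm_ge0. Qed.

Lemma Gf_le x n : 1 <= b ^+ n * `|x| -> (Gf x <= (2 * En n)%:E)%E.
Proof.
move=> h; have x0 : 0 < `|x|.
  rewrite lt_neqAle normr_ge0 andbT; apply/negP => /eqP x0.
  by move: h; rewrite -x0 mulr0 ler10.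
exact: (sec_lipnorm_le a0 a1 b2 ba x0 h).
Qed.

Lemma Gf_measurable : measurable_fun setT Gf.
Proof. exact: (G_measurable a b2). Qed.

Lemma Gf_fin : {ae leb, forall x, Gf x \is a fin_num}.
Proof.
apply: ae_nonzero => x x0.
have x0' : 0 < `|x| by rewrite normr_gt0.
rewrite ge0_fin_numE ?Gf_ge0 //.
apply: le_lt_trans (Gf_le (Kf_good b2 x0')) _; exact: ltry.
Qed.

Lemma level_meas s : measurable [set x | (s%:E < `|Gf x|)%E].
Proof.
rewrite (_ : [set x | _] = setT `&` [set x | (s%:E < Gf x)%E]).
  by apply: emeasurable_fun_o_infty => //; exact: Gf_measurable.
apply/seteqP; split => x /=; rewrite gee0_abs ?Gf_ge0 //.
by case.
Qed.

Lemma level_sub s J : 2 * En J <= s ->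
  [set x | (s%:E < `|Gf x|)%E] `<=` `](- (b ^+ J)^-1), (b ^+ J)^-1[.
Proof.
move=> hs x /=; rewrite gee0_abs ?Gf_ge0 // => hx.
rewrite in_itv /= -ltr_norml ltNge; apply/negP => hxJ.
have : 1 <= b ^+ J * `|x|.
  have bJ := bX_gt0 b2 J.
  by rewrite -(mulfV (lt0r_neq0 bJ)) ler_wpM2l // ltW.
move=> /Gf_le hG.
have := lt_le_trans hx hG; rewrite lte_fin; lra.
Qed.

Lemma level_meas_le s J : 2 * En J <= s ->
  (leb [set x | (s%:E < `|Gf x|)%E] <= (2 * (b ^+ J)^-1)%:E)%E.
Proof.
move=> hs.
have hle : (leb [set x | (s%:E < `|Gf x|)%E] <=
    leb `](- (b ^+ J)^-1)%R, (b ^+ J)^-1%R[)%E.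
  apply: (le_measure leb _ _ (level_sub hs)).
  - by rewrite inE; exact: level_meas.
  - by rewrite inE; exact: measurable_itv.
apply: le_trans hle _.
rewrite lebesgue_measure_itv /= lte_fin.
have bJ := bX_gt0 b2 J; have bJ' : 0 < (b ^+ J)^-1 by rewrite invr_gt0.
rewrite gtrN //= -EFinD lee_fin; lra.
Qed.

Lemma rearr_Gf t J : 2 * (b ^+ J)^-1 <= t ->
  (rearrangement Gf t <= (2 * En J)%:E)%E.
Proof.
move=> ht; apply: rearr_le.
  by rewrite mulr_ge0 // En_ge0.
apply: le_trans (level_meas_le (lexx _)) _; by rewrite lee_fin.
Qed.

Lemma Gf_distr s : 0 < s -> (leb [set x | (s%:E < `|Gf x|)%E] < +oo)%E.
Proof.
move=> s0; apply: le_lt_trans (@level_meas_le s 0 _) _; last exact: ltry.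
by rewrite /En big_ord0 mulr0 ltW.
Qed.

End SecF.

Section SecG.
Context {R : realType}.
Local Notation leb := (@lebesgue_measure R).
Variables (a b q : R).
Hypotheses (a0 : 0 < a) (a1 : a <= 1) (b2 : 2 <= b) (ba : b `^ a = 2) (q1 : 1 < q).

Local Notation Gf := (Gf a b).

Definition Fint (t : R) : \bar R :=
  (poweR ((t `^ a)%:E * rearrangement Gf t) q * (t^-1)%:E)%E.

Definition Ij (j : nat) : set R := `[2 * (b ^+ j.+1)^-1, 2 * (b ^+ j)^-1[.

Definition Aj (j : nat) : R :=
  (2 `^ a * (2 ^+ j)^-1 * (2 * En j.+1)) `^ q * (b ^+ j.+1 / 2).

Lemma Aj_ge0 j : 0 <= Aj j.
Proof.
apply: mulr_ge0; first exact: powR_ge0.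
by apply: divr_ge0 => //; exact: ltW (bX_gt0 b2 _).
Qed.

Lemma rearr_fin t J : 2 * (b ^+ J)^-1 <= t ->
  exists r, [/\ rearrangement Gf t = r%:E, 0 <= r & r <= 2 * En J].
Proof.
move=> ht; have h1 := rearr_Gf a0 a1 b2 ba ht; have h0 := rearr_ge0 Gf t.
move: h1 h0; case: (rearrangement Gf t) => [r| |] //= h1 h0.
by exists r; split => //; rewrite -lee_fin.
Qed.

Lemma Fint_le_A t j : Ij j t -> (Fint t <= (Aj j)%:E)%E.
Proof.
rewrite /Ij /= in_itv /= => /andP[ht1 ht2].
have bj := bX_gt0 b2 j; have bj1 := bX_gt0 b2 j.+1.
have t0 : 0 < t by apply: lt_le_trans ht1; rewrite mulr_gt0 // invr_gt0.
rewrite /Fint; have [r [-> r0 r1]] := rearr_fin ht1.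
rewrite (_ : ((t `^ a)%:E * r%:E)%E = (t `^ a * r)%:E) // poweR_EFin -EFinM lee_fin /Aj.
apply: ler_pM.
- exact: powR_ge0.
- by rewrite invr_ge0 ltW.
- apply: ge0_ler_powR; first exact: ltW (lt_trans ltr01 q1).
  + by rewrite nnegrE mulr_ge0 // powR_ge0.
  + rewrite nnegrE; apply: mulr_ge0; last by rewrite mulr_ge0 // En_ge0.
    by apply: mulr_ge0; [exact: powR_ge0|rewrite invr_ge0 exprn_ge0].
  + apply: ler_pM => //; first exact: powR_ge0.
    have -> : 2 `^ a * (2 ^+ j)^-1 = (2 * (b ^+ j)^-1) `^ a.
      rewrite powRM //; last by rewrite invr_ge0 ltW.
      by rewrite powR_invr // bXpow.
    by apply: ge0_ler_powR; rewrite ?nnegrE ?ltW //; lra.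
- have -> : b ^+ j.+1 / 2 = (2 * (b ^+ j.+1)^-1)^-1.
    by rewrite invfM invrK mulrC.
  rewrite lef_pV2 // posrE // mulr_gt0 // invr_gt0 //.
Qed.

Lemma Fint_big t : 2 <= t -> Fint t = 0%E.
Proof.
move=> ht.
have ht' : 2 * (b ^+ 0)^-1 <= t by rewrite expr0 invr1 mulr1.
have [r [er r0 r1]] := rearr_fin ht'.
have r00 : r = 0 by move: r1; rewrite /En big_ord0 mulr0; lra.
by rewrite /Fint er r00 mule0 poweR_EFin powR0 ?mul0e // lt0r_neq0 // (lt_trans ltr01 q1).
Qed.

Lemma Fint_ge0 t : 0 < t -> (0 <= Fint t)%E.
Proof.
by move=> t0; apply: mule_ge0; [exact: poweR_ge0|rewrite lee_fin invr_ge0 ltW].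
Qed.

Definition Hf (j : nat) (t : R) : \bar R := (Aj j * \1_(Ij j) t)%:E.

Lemma Hf_ge0 j t : (0 <= Hf j t)%E.
Proof. by rewrite lee_fin mulr_ge0 ?Aj_ge0. Qed.

Lemma Fint_le_H t : 0 < t -> (Fint t <= \sum_(0 <= j <oo) Hf j t)%E.
Proof.
move=> t0; have [t2|t2] := leP 2 t.
  by rewrite Fint_big //; apply: nneseries_ge0 => n _ _; exact: Hf_ge0.
pose P := fun j : nat => 2 * (b ^+ j.+1)^-1 <= t.
have exP : exists j, P j.
  have t20 : 0 < t / 2 by rewrite divr_gt0.
  exists (Kf (t / 2)); rewrite /P.
  have h := good_mono b2 (ltW t20) (leqnSn _) (Kf_good b2 t20).
  have bk := bX_gt0 b2 (Kf (t / 2)).+1.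
  rewrite -(ler_pM2l bk) mulrCA mulfV ?gt_eqF // mulr1.
  move: h; rewrite mulrCA; lra.
case: (ex_minnP exP) => j Pj jmin.
have Ijt : Ij j t.
  have Pj' : 2 * (b ^+ j.+1)^-1 <= t := Pj.
  rewrite /Ij /= in_itv /= Pj' /=.
  case: j Pj Pj' jmin => [|i] Pj Pj' jmin; first by rewrite expr0 invr1 mulr1.
  rewrite ltNge; apply/negP => hi; have := jmin i hi; by rewrite ltnn.
apply: le_trans (Fint_le_A Ijt) _.
apply: le_trans (nneseries_lim_ge j.+1 (fun n _ _ => Hf_ge0 n t)).
rewrite big_nat_recr //= /Hf indicE mem_set // mulr1.
by apply: leeDr; apply: sume_ge0 => k _; exact: Hf_ge0.
Qed.

End SecG.

Lemma poweR_fin (R : realType) (x : \bar R) (r : R) : (x < +oo)%E -> (poweR x r < +oo)%E.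
Proof.
case: x => [x| |] //= _; first exact: ltry.
by case: ifP => _; rewrite ?ltry.
Qed.

Lemma nneseries_le_bound (R : realType) (u : nat -> R) (M : R) :
  (forall j, 0 <= u j) -> (forall n, \sum_(j < n) u j <= M) ->
  (\sum_(0 <= j <oo) (u j)%:E <= M%:E)%E.
Proof.
move=> u0 hM; apply: lime_le.
  by apply: is_cvg_nneseries => n _ _; rewrite lee_fin.
by apply: nearW => n; rewrite sumEFin lee_fin big_mkord.
Qed.

Section SecH.
Context {R : realType}.
Local Notation leb := (@lebesgue_measure R).
Variables (a b q : R).
Hypotheses (a0 : 0 < a) (a1 : a <= 1) (b2 : 2 <= b) (ba : b `^ a = 2) (q1 : 1 < q).

Let q0 : 0 < q. Proof. exact: lt_trans ltr01 q1. Qed.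

Lemma Hf_measurable j : measurable_fun setT (Hf a b q j).
Proof.
apply/measurable_EFinP; apply: measurable_funM; first exact: measurable_cst.
by apply: measurable_indic; exact: measurable_itv.
Qed.

Lemma int_Hj (D : set R) j : measurable D ->
  (\int[leb]_(t in D) Hf a b q j t <= (Aj a b q j * (2 * (b ^+ j)^-1))%:E)%E.
Proof.
move=> mD.
rewrite (@eq_integral _ _ _ leb D (fun t => (Aj a b q j)%:E * (\1_(Ij b j) t)%:E)%E); last first.
  by move=> t _; rewrite /Hf EFinM.
rewrite ge0_integralZl_EFin //; last 2 first.
- apply/measurable_EFinP; apply: measurable_funTS.
  by apply: measurable_indic; exact: measurable_itv.
- exact: Aj_ge0.
rewrite integral_indic //; last exact: measurable_itv.
suff hm : (leb (Ij b j `&` D) <= (2 * (b ^+ j)^-1)%:E)%E.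
  rewrite EFinM.
  have := @lee_wpmul2l R (Aj a b q j)%:E _ _ _ hm; apply.
  by rewrite lee_fin Aj_ge0.
have hle : (leb (Ij b j `&` D) <= leb (Ij b j))%E.
  apply: measureIl; [exact: measurable_itv|exact: mD].
apply: le_trans hle _.
rewrite /Ij lebesgue_measure_itv /= lte_fin.
have bj := bX_gt0 b2 j; have bj1 := bX_gt0 b2 j.+1.
have hlt : 2 * (b ^+ j.+1)^-1 < 2 * (b ^+ j)^-1.
  rewrite ltr_pM2l // ltf_pV2 ?posrE // exprS ltr_pMl //.
  by apply: lt_le_trans b2; rewrite ltr1n.
rewrite hlt -EFinD lee_fin gerDl oppr_le0 mulr_ge0 // invr_ge0 ltW //.
Qed.

Lemma Aj_bound j : Aj a b q j * (2 * (b ^+ j)^-1) <=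
  ((2 `^ a * 4) `^ q * b) * ((j.+2%:R)^-1) `^ q.
Proof.
have bj := bX_gt0 b2 j.
have e2j : (0 : R) < 2 ^+ j by rewrite exprn_gt0.
rewrite /Aj -mulrA.
have -> : b ^+ j.+1 / 2 * (2 * (b ^+ j)^-1) = b.
  by rewrite exprS; field; rewrite gt_eqF.
rewrite [in X in _ <= X]mulrAC.
apply: ler_wpM2r; first by apply: le_trans b2; rewrite ler0n.
have c0 : 0 <= 2 `^ a * 4 :> R by rewrite mulr_ge0 ?powR_ge0.
rewrite -powRM //.
apply: ge0_ler_powR; first exact: ltW.
- rewrite nnegrE; apply: mulr_ge0; last by rewrite mulr_ge0 // En_ge0.
  by apply: mulr_ge0; [exact: powR_ge0|rewrite invr_ge0 ltW].
- by rewrite nnegrE mulr_ge0 // invr_ge0.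
rewrite -mulrA -[X in _ <= X]mulrA ler_wpM2l ?powR_ge0 //.
have hE : En j.+1 <= 2 ^+ j.+1 / j.+2%:R :> R := En_le j.+1.
apply: (@le_trans _ _ ((2 ^+ j)^-1 * (2 * (2 ^+ j.+1 / j.+2%:R)))).
  apply: ler_wpM2l; first by rewrite invr_ge0 ltW.
  by apply: ler_wpM2l.
have j2 : (j.+2%:R : R) != 0 by rewrite pnatr_eq0.
rewrite exprS (_ : (2 ^+ j)^-1 * (2 * (2 * 2 ^+ j / j.+2%:R)) = 4 / j.+2%:R) //.
by field; apply/andP; split => //; rewrite gt_eqF.
Qed.


Lemma int_Fint_le :
  (\int[leb]_(t in `]0%R, +oo[) Fint a b q t <= (((2 `^ a * 4) `^ q * b) * (q - 1)^-1)%:E)%E.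
Proof.
have mD : measurable (`]0, +oo[ : set R) := measurable_itv _.
have C0 : 0 <= (2 `^ a * 4) `^ q * b.
  by rewrite mulr_ge0 ?powR_ge0 //; apply: le_trans b2; rewrite ler0n.
apply: le_trans (my_le_integral (f2 := fun t => (\sum_(0 <= j <oo) Hf a b q j t)%E) _ _) _.
- move=> t; rewrite /= in_itv /= andbT => t0; exact: Fint_ge0.
- move=> t; rewrite /= in_itv /= andbT => t0; exact: Fint_le_H.
rewrite integral_nneseries //; last 2 first.
- move=> n; apply: measurable_funTS; exact: Hf_measurable.
- by move=> n t _; exact: Hf_ge0.
apply: le_trans (@lee_nneseries _ _
   (fun j => (((2 `^ a * 4) `^ q * b) * ((j.+2%:R)^-1) `^ q)%:E) xpredT 0 _ _) _.
- by move=> i _ _; apply: integral_ge0 => t _; exact: Hf_ge0.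
- move=> n _; apply: le_trans (int_Hj n mD) _; rewrite lee_fin; exact: Aj_bound.
apply: nneseries_le_bound.
  by move=> j; rewrite mulr_ge0 // powR_ge0.
move=> n; rewrite -mulr_sumr; apply: ler_wpM2l => //; exact: pseries_bound.
Qed.

End SecH.

Unset Implicit Arguments.
Unset Strict Implicit.

Theorem proposition2p2 (R : realType) (p q : R) :
  1 < p -> 1 < q ->
  exists f : R * R -> R,
    [/\ measurable_fun setT f,
        {ae (@lebesgue_measure R), forall x, in_Lip p^-1 (fun y => f (x, y))},
        {ae (@lebesgue_measure R), forall y, in_Lip p^-1 (fun x => f (x, y))},
        in_Lorentz p q (fun x => lip_norm p^-1 (fun y => f (x, y))) /\
        in_Lorentz p q (fun y => lip_norm p^-1 (fun x => f (x, y)))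
      & ~ in_Linf2 f].
Proof.
move=> p1 q1.
have p0 : 0 < p by exact: lt_trans ltr01 p1.
have a0 : 0 < p^-1 by rewrite invr_gt0.
have a1 : p^-1 <= 1 by rewrite invf_le1 // ltW.
pose b := 2 `^ p.
have b2 : 2 <= b by apply: le1r_powR; [rewrite ler1n|exact: ltW].
have ba : b `^ p^-1 = 2 by rewrite /b -powRrM mulfV ?gt_eqF // powRr1.
pose f := fun z : R * R => Psi b (Num.max `|z.1| `|z.2|).
have fsym : forall y, (fun x => f (x, y)) = sec b `|y|.
  by move=> y; apply/funext => x; rewrite /f /sec /= maxC.
have fsec : forall x, (fun y => f (x, y)) = sec b `|x| by [].
have Lor : in_Lorentz p q (Gf p^-1 b).
  split.
  - exact: Gf_measurable.
  - exact: Gf_fin.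
  - exact: Gf_distr.
  - rewrite /lorentz_norm; apply: poweR_fin.
    apply: le_lt_trans (int_Fint_le a0 a1 b2 ba q1) _; exact: ltry.
exists f; split.
- have -> : f = (fun x : R => Psi b `|x|) \o (fun z : R * R => Num.max `|z.1| `|z.2|).
    apply/funext => z /=; rewrite [`|Num.max _ _|]ger0_norm //.
  apply: measurableT_comp; first exact: Psi_abs_measurable.
  apply: measurable_maxr.
    by apply: measurableT_comp; [exact: normr_measurable|exact: measurable_fst].
  by apply: measurableT_comp; [exact: normr_measurable|exact: measurable_snd].
- apply: ae_nonzero => x x0; rewrite fsec.
  by apply: (sec_inLip a0 a1 b2 ba); rewrite normr_gt0.
- apply: ae_nonzero => y y0; rewrite fsym.
  by apply: (sec_inLip a0 a1 b2 ba); rewrite normr_gt0.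
- split; first exact: Lor.
  have -> : (fun y => lip_norm p^-1 (fun x => f (x, y))) = Gf p^-1 b.
    by apply/funext => y; rewrite fsym.
  exact: Lor.
- move=> [mf hfin].
  have [M hM] : exists M : R,
      (ess_sup (lebesgue_measure \x lebesgue_measure)%E (fun z => (`|f z|)%:E) <= M%:E)%E.
    move: hfin; case: (ess_sup _ _) => [r| |] // _; first by exists r.
    by exists 0; rewrite leNye.
  move/ess_supP: hM => hae.
  have [e e0 he] := Psi_unbounded b2 (M + 1).
  case: hae => N [mN N0 sub].
  pose A : set (R * R) := `]0, e] `*` `]0, e].
  have AN : A `<=` N.
    move=> [x y] [/= hx hy]; apply: sub => /=.
    move: hx hy; rewrite /= !in_itv /= => /andP[x0 xe] /andP[y0 ye].
    rewrite /f /= (gtr0_norm x0) (gtr0_norm y0).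
    have u0 : 0 < Num.max x y by rewrite lt_max x0.
    have ue : Num.max x y <= e by rewrite ge_max xe ye.
    have := he _ u0 ue; rewrite ger0_norm ?Psi_ge0 // lee_fin; lra.
  have mA : measurable A by apply: measurableX; exact: measurable_itv.
  have : ((lebesgue_measure \x lebesgue_measure) A <=
      (lebesgue_measure \x lebesgue_measure) N)%E.
    exact: (le_measure (lebesgue_measure \x lebesgue_measure)%E
      (mem_set mA) (mem_set mN) AN).
  rewrite N0 product_measure1E; try exact: measurable_itv.
  have le1 : lebesgue_measure (`]0%R, e]%classic : set R) = e%:E.
    by rewrite lebesgue_measure_itv /= lte_fin e0 sube0.
  move=> h; have h' : (e%:E * e%:E <= 0)%E by rewrite -le1; exact: h.
  move: h'; rewrite -EFinM lee_fin.
  have : 0 < e * e by rewrite mulr_gt0.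
  lra.
Qed.
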